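(* For all (well-formed, possibly open) $\lambda$-terms $t$ and $s$, $t \approx_{\mathrm{nf}} s$ if and only if there exists a natural number $n > \max(\mathrm{fv}(t) \cup \mathrm{fv}(s))$ such that $\langle t, [], n\rangle_{\mathrm{ev}} \approx \langle s, [], n\rangle_{\mathrm{ev}}$, where $\approx$ is machine bisimilarity on configurations of the NFB machine.
   Context: Terms: $t,s ::= f \mid x \mid \lambda x.t \mid t\,s$, where $f$ ranges over free variables, identified with natural numbers, and $x$ over bound variables; terms are well formed (every $x$ is bound by an enclosing $\lambda$); $\mathrm{fv}(t)$ is the set of free variables of $t$. Stacks: $\pi ::= t::\pi \mid []$. KAM transitions (on open terms): $\langle t\,s, \pi\rangle \to \langle t, s :: \pi\rangle$ and $\langle \lambda x.t, s::\pi\rangle \to \langle t\{s/x\}, \pi\rangle$; $\to^*$ is its reflexive transitive closure. A relation $\mathcal{R}$ on terms is extended to stacks by: $\pi_1 \mathcal R \pi_2$ iff $\pi_1=\pi_2=[]$, or $\pi_1 = t::\pi_1'$, $\pi_2 = s::\pi_2'$, $t\mathcal R s$ and $\pi_1'\mathcal R\pi_2'$. Normal-form bisimulation: a symmetric relation $\mathcal{R}$ on terms such that $t \mathcal R s$ implies (1) if $\langle t, []\rangle \to^* \langle \lambda x.t', []\rangle$ then there is $s'$ with $\langle s,[]\rangle \to^* \langle \lambda x.s', []\rangle$ and $t'\{f/x\} \mathcal R s'\{f/x\}$ for a fresh $f$; (2) if $\langle t, []\rangle \to^* \langle f, \pi\rangle$ then there is $\pi'$ with $\langle s,[]\rangle\to^*\langle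 f,\pi'\rangle$ and $\pi\mathcal R\pi'$. Normal-form bisimilarity $\approx_{\mathrm{nf}}$ is the largest normal-form bisimulation. NFB machine: configurations $\langle t,\pi,n\rangle_{\mathrm{ev}}$ and $\langle \pi, n\rangle_{\mathrm{cont}}$ ($n\in\mathbb N$); transitions labelled by $\tau$ or by flags: $\langle t\,s,\pi,n\rangle_{\mathrm{ev}} \xrightarrow{\tau} \langle t, s::\pi, n\rangle_{\mathrm{ev}}$; $\langle \lambda x.t, s::\pi, n\rangle_{\mathrm{ev}} \xrightarrow{\tau} \langle t\{s/x\},\pi,n\rangle_{\mathrm{ev}}$; $\langle \lambda x.t, [], n\rangle_{\mathrm{ev}} \xrightarrow{\lambda} \langle t\{n/x\}, [], n+1\rangle_{\mathrm{ev}}$; $\langle f, \pi, n\rangle_{\mathrm{ev}} \xrightarrow{f} \langle \pi, n\rangle_{\mathrm{cont}}$ (the flag is the natural number $f$); $\langle [], n\rangle_{\mathrm{cont}} \xrightarrow{\mathsf{done}}$ (terminating transition, to no configuration); $\langle t::\pi, n\rangle_{\mathrm{cont}} \xrightarrow{\mathsf{enter}} \langle t, [], n\rangle_{\mathrm{ev}}$; $\langle t::\pi, n\rangle_{\mathrm{cont}} \xrightarrow{\mathsf{skip}} \langle \pi, n\rangle_{\mathrm{cont}}$. Machine bisimulation: a symmetric relation $\mathcal R$ on configurations such that $C_1\mathcal R C_2$ implies, for every flag $F$: (1) if $C_1 \xrightarrow{\tau}^* \xrightarrow{F} C_1'$ then there is $C_2'$ with $C_2 \xrightarrow{\tau}^*\xrightarrow{F}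 C_2'$ and $C_1'\mathcal R C_2'$; (2) if $C_1 \xrightarrow{\tau}^*\xrightarrow{F}$ by a terminating transition then $C_2 \xrightarrow{\tau}^*\xrightarrow{F}$ by a terminating transition. Machine bisimilarity $\approx$ is the largest machine bisimulation. *)

(* Defs.v *)
(* Locally nameless lambda-terms: free variables are natural
   numbers (Fvar f), bound variables are de Bruijn indices (Bvar i). *)
From Stdlib Require Import List Arith.
Import ListNotations.

Inductive term : Type :=
| Fvar : nat -> term
| Bvar : nat -> term
| Lam  : term -> term
| App  : term -> term -> term.

Fixpoint open_rec (k : nat) (u : term) (t : term) : term :=
  match t with
  | Fvar f => Fvar f
  | Bvar i => if Nat.eqb i k then u else Bvar i
  | Lam t1 => Lam (open_rec (S k) u t1)
  | App t1 t2 => App (open_rec k u t1) (open_rec k u t2)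
  end.

Definition open (t u : term) : term := open_rec 0 u t.

Inductive wf_rec : nat -> term -> Prop :=
| wf_fvar : forall k f, wf_rec k (Fvar f)
| wf_bvar : forall k i, i < k -> wf_rec k (Bvar i)
| wf_lam  : forall k t, wf_rec (S k) t -> wf_rec k (Lam t)
| wf_app  : forall k t s, wf_rec k t -> wf_rec k s -> wf_rec k (App t s).

Definition wf (t : term) : Prop := wf_rec 0 t.

Fixpoint fv (t : term) : list nat :=
  match t with
  | Fvar f => [f]
  | Bvar _ => []
  | Lam t1 => fv t1
  | App t1 t2 => fv t1 ++ fv t2
  end.

Definition stack := list term.

Inductive kam_step : term * stack -> term * stack -> Prop :=
| kam_app : forall t s pi, kam_step (App t s, pi) (t, s :: pi)
| kam_beta : forall t s pi, kam_step (Lam t, s :: pi) (open t s, pi).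

Inductive kam_star : term * stack -> term * stack -> Prop :=
| kam_refl : forall c, kam_star c c
| kam_trans : forall c1 c2 c3, kam_step c1 c2 -> kam_star c2 c3 -> kam_star c1 c3.

Inductive stack_rel (R : term -> term -> Prop) : stack -> stack -> Prop :=
| srel_nil : stack_rel R [] []
| srel_cons : forall t s pi1 pi2,
    R t s -> stack_rel R pi1 pi2 -> stack_rel R (t :: pi1) (s :: pi2).

Definition symmetric_rel {A} (R : A -> A -> Prop) : Prop :=
  forall x y, R x y -> R y x.

Definition nf_bisimulation (R : term -> term -> Prop) : Prop :=
  symmetric_rel R /\
  forall t s, R t s ->
    (forall t', kam_star (t, []) (Lam t', []) ->
       exists s', kam_star (s, []) (Lam s', []) /\
         exists f, ~ In f (fv t') /\ ~ In f (fv s') /\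
                   R (open t' (Fvar f)) (open s' (Fvar f))) /\
    (forall f pi, kam_star (t, []) (Fvar f, pi) ->
       exists pi', kam_star (s, []) (Fvar f, pi') /\ stack_rel R pi pi').

Definition nf_bisimilar (t s : term) : Prop :=
  exists R, nf_bisimulation R /\ R t s.

Inductive config : Type :=
| Ev : term -> stack -> nat -> config
| Cont : stack -> nat -> config.

Inductive flag : Type :=
| FLam : flag
| FVar : nat -> flag
| FDone : flag
| FEnter : flag
| FSkip : flag.

Inductive tau_step : config -> config -> Prop :=
| tau_app : forall t s pi n, tau_step (Ev (App t s) pi n) (Ev t (s :: pi) n)
| tau_beta : forall t s pi n, tau_step (Ev (Lam t) (s :: pi) n) (Ev (open t s) pi n).

Inductive tau_star : config -> config -> Prop :=
| tau_refl : forall c, tau_star c c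
| tau_trans : forall c1 c2 c3, tau_step c1 c2 -> tau_star c2 c3 -> tau_star c1 c3.

Inductive flag_step : config -> flag -> config -> Prop :=
| fs_lam : forall t n, flag_step (Ev (Lam t) [] n) FLam (Ev (open t (Fvar n)) [] (S n))
| fs_var : forall f pi n, flag_step (Ev (Fvar f) pi n) (FVar f) (Cont pi n)
| fs_enter : forall t pi n, flag_step (Cont (t :: pi) n) FEnter (Ev t [] n)
| fs_skip : forall t pi n, flag_step (Cont (t :: pi) n) FSkip (Cont pi n).

Inductive flag_term : config -> flag -> Prop :=
| ft_done : forall n, flag_term (Cont [] n) FDone.

Definition machine_bisimulation (R : config -> config -> Prop) : Prop :=
  symmetric_rel R /\
  forall C1 C2, R C1 C2 ->
    forall F : flag,
      (forall C1' C1'', tau_star C1 C1' -> flag_step C1' F C1'' ->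
         exists C2' C2'', tau_star C2 C2' /\ flag_step C2' F C2'' /\ R C1'' C2'') /\
      ((exists C1', tau_star C1 C1' /\ flag_term C1' F) ->
         exists C2', tau_star C2 C2' /\ flag_term C2' F).

Definition machine_bisimilar (C1 C2 : config) : Prop :=
  exists R, machine_bisimulation R /\ R C1 C2.

(* Main.v *)
Require Import Defs.
From Stdlib Require Import List Arith Lia.
Import ListNotations.

Definition bnd (m : nat) (t : term) := forall x, In x (fv t) -> x < m.
Definition bnds (m : nat) (pi : stack) := forall u, In u pi -> bnd m u.

Lemma bnds_nil : forall m, bnds m [].
Proof. intros m u []. Qed.

Lemma fv_open_rec : forall t k u x, In x (fv (open_rec k u t)) -> In x (fv t) \/ In x (fv u).
Proof.
  induction t; simpl; intros k u x H.
  - auto.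
  - destruct (Nat.eqb n k); simpl in H; auto.
  - eapply IHt; eauto.
  - apply in_app_or in H. destruct H as [H|H].
    + destruct (IHt1 _ _ _ H); auto using in_or_app.
    + destruct (IHt2 _ _ _ H); auto using in_or_app.
Qed.

Lemma bnd_open : forall m t u, bnd m t -> bnd m u -> bnd m (open t u).
Proof. unfold bnd, open; intros m t u H1 H2 x Hx. destruct (fv_open_rec _ _ _ _ Hx); auto. Qed.

Lemma bnd_open_S : forall m t, bnd m t -> bnd (S m) (open t (Fvar m)).
Proof.
  unfold bnd, open; intros m t H x Hx. destruct (fv_open_rec _ _ _ _ Hx) as [h|h].
  - apply H in h; lia.
  - simpl in h; destruct h as [<-|[]]; lia.
Qed.

Lemma kam_step_bnd : forall c1 c2, kam_step c1 c2 -> forall m, bnd m (fst c1) -> bnds m (snd c1) -> bnd m (fst c2) /\ bnds m (snd c2).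
Proof.
  intros c1 c2 H; destruct H; simpl; intros m H1 H2; split.
  - intros x Hx; apply H1; simpl; apply in_or_app; auto.
  - intros u [<-|Hu] x Hx; [apply H1; simpl; apply in_or_app; auto | eapply H2; eauto].
  - apply bnd_open; [exact H1 | apply H2; simpl; auto].
  - intros u Hu; apply H2; simpl; auto.
Qed.

Lemma kam_star_bnd : forall c1 c2, kam_star c1 c2 -> forall m, bnd m (fst c1) -> bnds m (snd c1) -> bnd m (fst c2) /\ bnds m (snd c2).
Proof.
  intros c1 c2 H; induction H; intros m H1 H2; auto.
  destruct (kam_step_bnd _ _ H m H1 H2); auto.
Qed.

Lemma tau_star_ev : forall C C', tau_star C C' -> forall t pi n, C = Ev t pi n ->
  exists t' pi', C' = Ev t' pi' n /\ kam_star (t,pi) (t',pi').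
Proof.
  intros C C' H; induction H; intros t0 pi0 n0 E; subst.
  - exists t0, pi0; split; auto; constructor.
  - inversion H; subst.
    + destruct (IHtau_star _ _ _ eq_refl) as (t'&pi'&E&K). exists t', pi'; split; auto.
      eapply kam_trans; [constructor|exact K].
    + destruct (IHtau_star _ _ _ eq_refl) as (t'&pi'&E&K). exists t', pi'; split; auto.
      eapply kam_trans; [constructor|exact K].
Qed.

Lemma kam_tau : forall c1 c2, kam_star c1 c2 -> forall n, tau_star (Ev (fst c1) (snd c1) n) (Ev (fst c2) (snd c2) n).
Proof.
  intros c1 c2 H; induction H; intros n. constructor.
  destruct H; simpl in *; [eapply tau_trans; [apply tau_app|apply IHkam_star] | eapply tau_trans; [apply tau_beta|apply IHkam_star]].
Qed.

Lemma tau_star_cont : forall C C', tau_star C C' -> forall pi n, C = Cont pi n -> C' = C.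
Proof. intros C C' H; induction H; intros pi n E; subst; auto. inversion H. Qed.

Definition swv (a b x : nat) := if Nat.eqb x a then b else if Nat.eqb x b then a else x.
Fixpoint sw (a b : nat) (t : term) : term := match t with
 | Fvar f => Fvar (swv a b f) | Bvar i => Bvar i | Lam t => Lam (sw a b t)
 | App t s => App (sw a b t) (sw a b s) end.

Lemma swv_inv : forall a b x, swv a b (swv a b x) = x.
Proof.
  intros; unfold swv.
  repeat (cbv beta iota; match goal with |- context [Nat.eqb ?x ?y] => is_var x; is_var y; destruct (Nat.eqb_spec x y) end); lia.
Qed.

Lemma sw_inv : forall a b t, sw a b (sw a b t) = t.
Proof. induction t; simpl; f_equal; auto using swv_inv. Qed.

Lemma sw_open_rec : forall a b t k u, sw a b (open_rec k u t) = open_rec k (sw a b u) (sw a b t).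
Proof.
  induction t; simpl; intros; f_equal; auto.
  destruct (Nat.eqb n k); auto.
Qed.

Lemma fv_sw : forall a b t, fv (sw a b t) = map (swv a b) (fv t).
Proof. induction t; simpl; auto. rewrite map_app; f_equal; auto. Qed.

Lemma sw_fresh : forall a b t, ~ In a (fv t) -> ~ In b (fv t) -> sw a b t = t.
Proof.
  induction t; simpl; intros Ha Hb; f_equal; auto.
  - unfold swv. destruct (Nat.eqb_spec n a); [exfalso; auto|].
    destruct (Nat.eqb_spec n b); [exfalso; auto|]. auto.
  - apply IHt1; intro; [apply Ha|apply Hb]; apply in_or_app; auto.
  - apply IHt2; intro; [apply Ha|apply Hb]; apply in_or_app; auto.
Qed.

Definition swc a b (c : term * stack) := (sw a b (fst c), map (sw a b) (snd c)).

Lemma kam_step_sw : forall a b c1 c2, kam_step c1 c2 -> kam_step (swc a b c1) (swc a b c2).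
Proof.
  intros a b c1 c2 H; destruct H; unfold swc; simpl.
  - constructor.
  - unfold open; rewrite sw_open_rec. constructor.
Qed.

Lemma kam_star_sw : forall a b c1 c2, kam_star c1 c2 -> kam_star (swc a b c1) (swc a b c2).
Proof.
  intros a b c1 c2 H; induction H. constructor.
  econstructor; [apply kam_step_sw; eauto | auto].
Qed.

Lemma stack_rel_mono : forall (R R' : term -> term -> Prop), (forall x y, R x y -> R' x y) ->
  forall p q, stack_rel R p q -> stack_rel R' p q.
Proof. intros R R' H p q S; induction S; constructor; auto. Qed.

Lemma stack_rel_sym : forall (R : term -> term -> Prop), symmetric_rel R ->
  forall p q, stack_rel R p q -> stack_rel R q p.
Proof. intros R H p q S; induction S; constructor; auto. Qed.

Lemma stack_rel_sw : forall R a b p q, stack_rel R (map (sw a b) p) q ->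
  stack_rel (fun x y => R (sw a b x) (sw a b y)) p (map (sw a b) q).
Proof.
  intros R a b p; induction p as [|u p IH]; intros q H; inversion H; subst; simpl; constructor.
  - rewrite sw_inv; auto.
  - apply IH; auto.
Qed.

Lemma nfb_bisim : nf_bisimulation nf_bisimilar.
Proof.
  split.
  - intros x y [R [[HS HR] Hxy]]. exists R; split; [split; auto | apply HS; auto].
  - intros t s [R [[HS HR] Hts]]. destruct (HR _ _ Hts) as [H1 H2]. split.
    + intros t' K. destruct (H1 _ K) as (s'&K'&f&F1&F2&HR'). exists s'; split; auto.
      exists f; repeat split; auto. exists R; split; [split; auto | auto].
    + intros f pi K. destruct (H2 _ _ K) as (pi'&K'&SR). exists pi'; split; auto.
      eapply stack_rel_mono; [|exact SR]. intros x y Hxy; exists R; split; [split|]; auto.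
Qed.

Lemma nfb_sw : forall a b u v, nf_bisimilar u v -> nf_bisimilar (sw a b u) (sw a b v).
Proof.
  intros a b u v [R [[HS HR] Huv]].
  exists (fun x y => R (sw a b x) (sw a b y)). split; [| rewrite !sw_inv; auto]. split.
  - intros x y H; apply HS; auto.
  - intros t s Hts. destruct (HR _ _ Hts) as [H1 H2]. split.
    + intros t' K. apply (kam_star_sw a b) in K; unfold swc in K; simpl in K.
      destruct (H1 _ K) as (s'&K'&f&F1&F2&HR'). exists (sw a b s'). split.
      * apply (kam_star_sw a b) in K'; unfold swc in K'; simpl in K'; rewrite sw_inv in K'; exact K'.
      * exists (swv a b f). split; [|split].
        -- intro Hin. apply F1. rewrite fv_sw.
           replace f with (swv a b (swv a b f)) by apply swv_inv. apply in_map; auto.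
        -- intro Hin. apply F2. rewrite fv_sw in Hin. apply in_map_iff in Hin as (y&E&Hy).
           assert (y = f) as -> by (rewrite <- (swv_inv a b y), E, swv_inv; reflexivity).
           auto.
        -- unfold open in *. rewrite !sw_open_rec; simpl; rewrite swv_inv, sw_inv. exact HR'.
    + intros g pi K. apply (kam_star_sw a b) in K; unfold swc in K; simpl in K.
      destruct (H2 _ _ K) as (pi'&K'&SR). exists (map (sw a b) pi'). split.
      * apply (kam_star_sw a b) in K'; unfold swc in K'; simpl in K'.
        rewrite sw_inv, swv_inv in K'. exact K'.
      * apply stack_rel_sw; auto.
Qed.

Definition M (C1 C2 : config) : Prop :=
 (exists t s n, C1 = Ev t [] n /\ C2 = Ev s [] n /\ nf_bisimilar t s /\ bnd n t /\ bnd n s) \/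
 (exists p q n, C1 = Cont p n /\ C2 = Cont q n /\ stack_rel nf_bisimilar p q /\ bnds n p /\ bnds n q).

Lemma M_bisim : machine_bisimulation M.
Proof.
  destruct nfb_bisim as [NS NB]. split.
  - intros C1 C2 [(t&s&n&->&->&HN&Bt&Bs)|(p&q&n&->&->&SR&Bp&Bq)].
    + left; exists s, t, n; repeat split; auto.
    + right; exists q, p, n; repeat split; auto. apply stack_rel_sym; auto.
  - intros C1 C2 HM F. split.
    + intros C1' C1'' T FS.
      destruct HM as [(t&s&n&->&->&HN&Bt&Bs)|(p&q&n&->&->&SR&Bp&Bq)].
      * destruct (tau_star_ev _ _ T _ _ _ eq_refl) as (t1&pi1&->&K).
        destruct (NB _ _ HN) as [H1 H2].
        inversion FS; subst.
        -- destruct (H1 _ K) as (s'&K'&f&F1&F2&HR).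
           destruct (kam_star_bnd _ _ K n Bt (bnds_nil n)) as [Bt0 _].
           destruct (kam_star_bnd _ _ K' n Bs (bnds_nil n)) as [Bs0 _].
           simpl in Bt0, Bs0.
           exists (Ev (Lam s') [] n), (Ev (open s' (Fvar n)) [] (S n)).
           split; [apply (kam_tau _ _ K' n)|split; [constructor|]].
           left. exists (open t0 (Fvar n)), (open s' (Fvar n)), (S n).
           split; [auto|split; [auto|split]].
           ++ apply (nfb_sw f n) in HR. unfold open in *. rewrite !sw_open_rec in HR.
              simpl in HR. replace (swv f n f) with n in HR by (unfold swv; rewrite Nat.eqb_refl; reflexivity).
              rewrite (sw_fresh f n t0), (sw_fresh f n s') in HR; auto.
              ** intro Hi; apply Bs0 in Hi; lia.
              ** intro Hi; apply Bt0 in Hi; lia.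
           ++ split; apply bnd_open_S; auto.
        -- destruct (H2 _ _ K) as (pi'&K'&SR).
           destruct (kam_star_bnd _ _ K n Bt (bnds_nil n)) as [_ Bp].
           destruct (kam_star_bnd _ _ K' n Bs (bnds_nil n)) as [_ Bq].
           simpl in Bp, Bq.
           exists (Ev (Fvar f) pi' n), (Cont pi' n).
           split; [apply (kam_tau _ _ K' n)|split; [constructor|]].
           right. exists pi1, pi', n; repeat split; auto.
      * rewrite (tau_star_cont _ _ T _ _ eq_refl) in FS.
        inversion FS; subst; inversion SR; subst.
        -- exists (Cont (s :: pi2) n), (Ev s [] n).
           split; [constructor|split; [constructor|]].
           left. exists t, s, n; repeat split; auto; [apply Bp|apply Bq]; simpl; auto.
        -- exists (Cont (s :: pi2) n), (Cont pi2 n).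
           split; [constructor|split; [constructor|]].
           right. exists pi, pi2, n; repeat split; auto;
             intros u Hu; [apply Bp|apply Bq]; simpl; auto.
    + intros (C1'&T&FT). inversion FT; subst.
      destruct HM as [(t&s&k&->&->&HN&Bt&Bs)|(p&q&k&->&->&SR&Bp&Bq)].
      * destruct (tau_star_ev _ _ T _ _ _ eq_refl) as (t1&pi1&E&K). discriminate.
      * pose proof (tau_star_cont _ _ T _ _ eq_refl) as E. inversion E; subst.
        inversion SR; subst. exists (Cont [] k); split; constructor.
Qed.

Lemma mb_sym : forall C1 C2, machine_bisimilar C1 C2 -> machine_bisimilar C2 C1.
Proof. intros C1 C2 [R [[HS HR] H]]. exists R; split; [split|]; auto. Qed.

Lemma mb_step : forall C1 C2 C1' C1'' F, machine_bisimilar C1 C2 -> tau_star C1 C1' -> flag_step C1' F C1'' ->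
  exists C2' C2'', tau_star C2 C2' /\ flag_step C2' F C2'' /\ machine_bisimilar C1'' C2''.
Proof.
  intros C1 C2 C1' C1'' F [R [[HS HR] H]] T FS.
  destruct (HR _ _ H F) as [H1 _]. destruct (H1 _ _ T FS) as (C2'&C2''&T'&FS'&HR').
  exists C2', C2''; repeat split; auto. exists R; split; [split|]; auto.
Qed.

Lemma mb_term : forall C1 C2 C1' F, machine_bisimilar C1 C2 -> tau_star C1 C1' -> flag_term C1' F ->
  exists C2', tau_star C2 C2' /\ flag_term C2' F.
Proof.
  intros C1 C2 C1' F [R [[HS HR] H]] T FT.
  destruct (HR _ _ H F) as [_ H2]. apply H2; eauto.
Qed.

Definition RR (x y : term) : Prop :=
  exists m, bnd m x /\ bnd m y /\ machine_bisimilar (Ev x [] m) (Ev y [] m).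

Lemma stack_lemma : forall p q m, machine_bisimilar (Cont p m) (Cont q m) -> bnds m p -> bnds m q ->
  stack_rel RR p q.
Proof.
  induction p as [|u p IH]; intros q m MB Bp Bq.
  - destruct (mb_term _ _ _ _ MB (tau_refl _) (ft_done m)) as (C2'&T&FT).
    rewrite (tau_star_cont _ _ T _ _ eq_refl) in FT. inversion FT; subst. constructor.
  - destruct (mb_step _ _ _ _ _ MB (tau_refl _) (fs_enter u p m)) as (C2'&C2''&T&FS&MB1).
    rewrite (tau_star_cont _ _ T _ _ eq_refl) in FS. inversion FS; subst.
    destruct (mb_step _ _ _ _ _ MB (tau_refl _) (fs_skip u p m)) as (C3'&C3''&T3&FS3&MB3).
    rewrite (tau_star_cont _ _ T3 _ _ eq_refl) in FS3. inversion FS3; subst.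
    constructor.
    + exists m; repeat split; auto; [apply Bp|apply Bq]; simpl; auto.
    + apply (IH _ m MB3); intros v Hv; [apply Bp|apply Bq]; simpl; auto.
Qed.

Lemma RR_bisim : nf_bisimulation RR.
Proof.
  split.
  - intros x y (m&Bx&By&MB). exists m; repeat split; auto. apply mb_sym; auto.
  - intros x y (m&Bx&By&MB). split.
    + intros x' K.
      destruct (mb_step _ _ _ _ _ MB (kam_tau _ _ K m) (fs_lam x' m)) as (C2'&C2''&T&FS&MB').
      destruct (tau_star_ev _ _ T _ _ _ eq_refl) as (y1&pi1&->&K').
      inversion FS; subst.
      destruct (kam_star_bnd _ _ K m Bx (bnds_nil m)) as [Bx0 _].
      destruct (kam_star_bnd _ _ K' m By (bnds_nil m)) as [By0 _].
      simpl in Bx0, By0.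
      exists t; split; auto. exists m. split; [|split].
      * intro Hi; apply Bx0 in Hi; lia.
      * intro Hi; apply By0 in Hi; lia.
      * exists (S m); repeat split; auto; apply bnd_open_S; auto.
    + intros f pi K.
      destruct (mb_step _ _ _ _ _ MB (kam_tau _ _ K m) (fs_var f pi m)) as (C2'&C2''&T&FS&MB').
      destruct (tau_star_ev _ _ T _ _ _ eq_refl) as (y1&pi1&->&K').
      inversion FS; subst.
      destruct (kam_star_bnd _ _ K m Bx (bnds_nil m)) as [_ Bp].
      destruct (kam_star_bnd _ _ K' m By (bnds_nil m)) as [_ Bq].
      simpl in Bp, Bq.
      exists pi1; split; auto. eapply stack_lemma; eauto.
Qed.

Fixpoint maxl (l : list nat) : nat := match l with [] => 0 | x :: l => Nat.max x (maxl l) end.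
Lemma maxl_spec : forall l x, In x l -> x <= maxl l.
Proof. induction l; simpl; intros x H; [destruct H|]. destruct H as [<-|H]; [lia|]. apply IHl in H; lia. Qed.

Theorem theorem4p5 :
  forall t s : term, wf t -> wf s ->
    (nf_bisimilar t s <->
     exists n : nat,
       (forall f, In f (fv t ++ fv s) -> f < n) /\
       machine_bisimilar (Ev t nil n) (Ev s nil n)).
Proof.
  intros t s _ _. split.
  - intros HN. exists (S (maxl (fv t ++ fv s))).
    assert (Hb : forall f, In f (fv t ++ fv s) -> f < S (maxl (fv t ++ fv s)))
      by (intros f Hf; apply maxl_spec in Hf; lia).
    split; auto. exists M; split; [apply M_bisim|].
    left; exists t, s, (S (maxl (fv t ++ fv s))); repeat split; auto;
      intros x Hx; apply Hb; apply in_or_app; auto.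
  - intros (n & Hb & MB). exists RR. split; [apply RR_bisim|].
    exists n; repeat split; auto; intros x Hx; apply Hb; apply in_or_app; auto.
Qed.
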